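(* Let $I\subseteq\mathbb{R}$ be an interval and let $f:I\to\mathbb{R}$ be convex on $I^{\circ}$, the interior of $I$. Let $a,b\in I^{\circ}$ with $a<b$, and suppose $f'\in L[a,b]$. If $f(a)f(b)>0$ and $\int_a^b f(t)\,dt=0$, then $$f(a)f(b)\le \frac{b-a}{12}\int_a^b f'(x)^2\,dx .$$ Moreover, the constant $\frac{b-a}{12}$ is best possible: it cannot be replaced by a smaller constant such that the inequality remains valid for all functions satisfying the hypotheses.
   Context: $L[a,b]$ denotes the space of Lebesgue integrable functions on $[a,b]$. A convex function on an open interval is differentiable almost everywhere, so $f'$ is defined a.e. on $[a,b]$. *)

(* Defs.v *)
From Stdlib Require Import Reals.
Open Scope R_scope.

Definition is_interval (P : R -> Prop) : Prop :=
  forall x y z, P x -> P z -> x <= y <= z -> P y.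

Definition convex_on (D : R -> Prop) (f : R -> R) : Prop :=
  forall x y t, D x -> D y -> 0 <= t <= 1 ->
    f (t * x + (1 - t) * y) <= t * f x + (1 - t) * f y.

(* g is "the" a.e.-defined derivative f' on (a,b): g x = f'(x) at every
   point of (a,b) where f is differentiable (f is differentiable at all
   but countably many points, so g is f' almost everywhere). *)
Definition is_derivative_where_exists (f g : R -> R) (a b : R) : Prop :=
  forall x l, a < x < b -> derivable_pt_lim f x l -> g x = l.

(* Main.v *)
From Coquelicot Require Import Coquelicot.
Require Import Defs.
From Stdlib Require Import Reals Lra Lia Classical ClassicalEpsilon.
Open Scope R_scope.

Fixpoint ssum (u : nat -> R) (n : nat) : R :=
  match n with O => 0 | S k => ssum u k + u k end.

Lemma ssum_shift u k : ssum u (S k) = u O + ssum (fun i => u (S i)) k.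
Proof. induction k; simpl in *; [lra|]. rewrite IHk. lra. Qed.

Lemma ssum_le u v k : (forall i, (i < k)%nat -> u i <= v i) -> ssum u k <= ssum v k.
Proof. induction k; simpl; intros H; [lra|].
  assert (ssum u k <= ssum v k) by (apply IHk; intros; apply H; lia).
  assert (u k <= v k) by (apply H; lia). lra. Qed.

Lemma ssum_ext u v k : (forall i, (i < k)%nat -> u i = v i) -> ssum u k = ssum v k.
Proof. induction k; simpl; intros H; [lra|].
  rewrite IHk by (intros; apply H; lia). rewrite H by lia. lra. Qed.

Lemma ssum_plus u v k : ssum (fun i => u i + v i) k = ssum u k + ssum v k.
Proof. induction k; simpl; [lra|]. rewrite IHk. lra. Qed.

Lemma ssum_scal c u k : ssum (fun i => c * u i) k = c * ssum u k.
Proof. induction k; simpl; [lra|]. rewrite IHk. lra. Qed.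

Lemma ssum_opp u k : ssum (fun i => - u i) k = - ssum u k.
Proof. induction k; simpl; [lra|]. rewrite IHk. lra. Qed.

Lemma ssum_tele v k : ssum (fun i => v (S i) - v i) k = v k - v O.
Proof. induction k; simpl; [lra|]. rewrite IHk. lra. Qed.

Lemma ssum_const c k : ssum (fun _ => c) k = INR k * c.
Proof. induction k; simpl ssum; [simpl; lra|]. rewrite IHk, S_INR. lra. Qed.

Lemma ssum_absdiff u v w k : (forall i, (i < k)%nat -> Rabs (u i - v i) <= w i) ->
  Rabs (ssum u k - ssum v k) <= ssum w k.
Proof. induction k; simpl; intros H.
  - rewrite Rminus_0_r, Rabs_R0; lra.
  - assert (H1 := IHk (fun i Hi => H i ltac:(lia))).
    assert (H2 := H k ltac:(lia)).
    replace (ssum u k + u k - (ssum v k + v k)) with ((ssum u k - ssum v k) + (u k - v k)) by ring.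
    eapply Rle_trans; [apply Rabs_triang|]. lra. Qed.

Lemma mkseq_S (x : nat -> R) k : seq.mkseq x (S k) = cons (x O) (seq.mkseq (fun i => x (S i)) k).
Proof.
  unfold seq.mkseq. simpl. f_equal.
  generalize O. induction k; intros m; simpl; [reflexivity|]. f_equal. apply IHk.
Qed.

Lemma RS_mkseq (phi : R -> R) (tau : R -> R -> R) k : forall x : nat -> R,
  Riemann_sum phi (SF_seq_f2 tau (seq.mkseq x (S k))) =
  ssum (fun i => (x (S i) - x i) * phi (tau (x i) (x (S i)))) k.
Proof.
  induction k; intros x.
  - reflexivity.
  - rewrite mkseq_S. rewrite SF_cons_f2.
    2:{ rewrite mkseq_S. simpl. lia. }
    rewrite Riemann_sum_cons. rewrite IHk. rewrite ssum_shift.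
    rewrite mkseq_S. simpl. reflexivity.
Qed.

Definition X (a b : R) (n i : nat) : R := a + INR i * (b - a) / (INR n + 1).

Lemma X_S a b n i : X a b n (S i) = X a b n i + (b - a) / (INR n + 1).
Proof. unfold X. rewrite S_INR. assert (0 < INR n + 1) by (pose proof (pos_INR n); lra). field. lra. Qed.

Lemma X_0 a b n : X a b n O = a.
Proof. unfold X. simpl. assert (0 < INR n + 1) by (pose proof (pos_INR n); lra). field. lra. Qed.

Lemma X_last a b n : X a b n (S n) = b.
Proof. unfold X. rewrite S_INR. assert (0 < INR n + 1) by (pose proof (pos_INR n); lra). field. lra. Qed.

Lemma small_step (d c : R) : 0 < d -> 0 < c -> exists N, forall n, (N <= n)%nat -> c / (INR n + 1) < d.
Proof.
  intros Hd Hc. destruct (archimed_cor1 (d / c)) as [N [HN HN0]].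
  { apply Rdiv_lt_0_compat; lra. }
  exists N. intros n Hn.
  assert (HN1 : 0 < INR N) by (apply lt_0_INR; lia).
  assert (INR N <= INR n) by (apply le_INR; lia).
  assert (c / (INR n + 1) <= c / INR N).
  { unfold Rdiv. apply Rmult_le_compat_l; [lra|]. apply Rinv_le_contravar; lra. }
  assert (c / INR N < d).
  { assert (/ INR N * c < d / c * c) by (apply Rmult_lt_compat_r; lra).
    replace (d / c * c) with d in H1 by (field; lra). unfold Rdiv. lra. }
  lra.
Qed.

Lemma bridge (phi : R -> R) a b l : a < b -> is_RInt phi a b l ->
  forall eps, 0 < eps -> exists N, forall n, (N <= n)%nat ->
  forall tau : R -> R -> R, (forall x y, x <= y -> x <= tau x y <= y) ->
  Rabs (ssum (fun i => (b - a) / (INR n + 1) * phi (tau (X a b n i) (X a b n (S i)))) (S n) - l) < eps.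
Proof.
  intros Hab H eps Heps.
  unfold is_RInt, filterlim, filter_le, filtermap in H.
  destruct (H _ (locally_ball l (mkposreal eps Heps))) as [d Hd].
  destruct (small_step d (b - a)) as [N HN]; [apply cond_pos|lra|].
  exists N. intros n Hn tau Htau.
  destruct (Riemann_fine_unif_part tau a b n Htau ltac:(lra)) as [H1 [H2 [H3 H4]]].
  assert (Hb := Hd (SF_seq_f2 tau (unif_part a b n))).
  rewrite Rmin_left, Rmax_right in Hb by lra.
  assert (HH := Hb ltac:(specialize (HN n Hn); lra) (conj H2 (conj H3 H4))).
  set (Sm := ssum (fun i => (b - a) / (INR n + 1) * phi (tau (X a b n i) (X a b n (S i)))) (S n)).
  assert (E : Riemann_sum phi (SF_seq_f2 tau (unif_part a b n)) = Sm).
  { unfold unif_part. rewrite RS_mkseq. apply ssum_ext. intros i Hi.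
    fold (X a b n i). fold (X a b n (S i)). rewrite X_S. unfold scal. simpl. unfold mult. simpl. ring. }
  rewrite sign_eq_1 in HH by lra.
  assert (HH' : Rabs (1 * Riemann_sum phi (SF_seq_f2 tau (unif_part a b n)) - l) < eps) by exact HH.
  rewrite E, Rmult_1_l in HH'. exact HH'.
Qed.

Definition slope (f : R -> R) (u v : R) : R := (f v - f u) / (v - u).

Lemma div_le_cross x y p q : 0 < p -> 0 < q -> x * q <= y * p -> x / p <= y / q.
Proof.
  intros Hp Hq H.
  replace (x / p) with ((x * q) * / (p * q)) by (field; lra).
  replace (y / q) with ((y * p) * / (p * q)) by (field; lra).
  apply Rmult_le_compat_r; [|exact H].
  left. apply Rinv_0_lt_compat. nra.
Qed.

Lemma chord3 D f u v w : convex_on D f -> D u -> D v -> D w -> u < v -> v < w ->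
  slope f u v <= slope f u w /\ slope f u w <= slope f v w.
Proof.
  intros Hc Du Dv Dw Huv Hvw.
  set (t := (w - v) / (w - u)).
  assert (Ht : 0 <= t <= 1).
  { unfold t. split.
    - apply Rdiv_le_0_compat; lra.
    - apply (Rmult_le_reg_r (w - u)); [lra|]. unfold Rdiv. rewrite Rmult_assoc, Rinv_l by lra. lra. }
  assert (Hcv := Hc u w t Du Dw Ht).
  replace (t * u + (1 - t) * w) with v in Hcv by (unfold t; field; lra).
  assert (Hm : (w - u) * f v <= (w - v) * f u + (v - u) * f w).
  { assert (H1 : (w - u) * f v <= (w - u) * (t * f u + (1 - t) * f w)) by (apply Rmult_le_compat_l; lra).
    replace ((w - u) * (t * f u + (1 - t) * f w)) with ((w - v) * f u + (v - u) * f w) in H1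
      by (unfold t; field; lra). exact H1. }
  unfold slope. split; apply div_le_cross; try lra.
Qed.

Lemma smono D f lo hi u v u' v' : convex_on D f -> (forall x, lo <= x <= hi -> D x) ->
  lo <= u -> u < v -> v <= hi -> lo <= u' -> u' < v' -> v' <= hi -> u <= u' -> v <= v' ->
  slope f u v <= slope f u' v'.
Proof.
  intros Hc HD H1 H2 H3 H4 H5 H6 H7 H8.
  assert (A : slope f u v <= slope f u v').
  { destruct (Req_dec v v') as [E|E]; [subst; lra|].
    apply (chord3 D f u v v' Hc); try (apply HD; lra); lra. }
  assert (B : slope f u v' <= slope f u' v').
  { destruct (Req_dec u u') as [E|E]; [subst; lra|].
    apply (chord3 D f u u' v' Hc); try (apply HD; lra); lra. }
  lra.
Qed.

Definition W f p q := slope f (q - (q - p) / 4) q - slope f p (p + (q - p) / 4).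

Lemma W_step D f p0 q0 p q : convex_on D f -> (forall x, p0 <= x <= q0 -> D x) ->
  p0 <= p -> p < q -> q <= q0 ->
  exists p' q', p + (q - p) / 4 <= p' /\ q' <= q - (q - p) / 4 /\ p' < q' /\
     W f p' q' <= W f p q / 2.
Proof.
  intros Hc HD H1 H2 H3.
  set (h := (q - p) / 8).
  assert (Hh : 0 < h) by (unfold h; lra).
  assert (A : W f (p + 2 * h) (p + 3 * h) <= slope f (p + 3*h) (p + 4*h) - slope f (p + h) (p + 2*h)).
  { unfold W.
    assert (slope f (p + 3 * h - (p + 3 * h - (p + 2 * h)) / 4) (p + 3 * h) <= slope f (p + 3*h) (p + 4*h))
      by (apply (smono D f p0 q0); auto; unfold h in *; lra).
    assert (slope f (p + h) (p + 2*h) <= slope f (p + 2 * h) (p + 2 * h + (p + 3 * h - (p + 2 * h)) / 4))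
      by (apply (smono D f p0 q0); auto; unfold h in *; lra).
    lra. }
  assert (B : W f (p + 4 * h) (p + 5 * h) <= slope f (p + 5*h) (p + 6*h) - slope f (p + 3*h) (p + 4*h)).
  { unfold W.
    assert (slope f (p + 5 * h - (p + 5 * h - (p + 4 * h)) / 4) (p + 5 * h) <= slope f (p + 5*h) (p + 6*h))
      by (apply (smono D f p0 q0); auto; unfold h in *; lra).
    assert (slope f (p + 3*h) (p + 4*h) <= slope f (p + 4 * h) (p + 4 * h + (p + 5 * h - (p + 4 * h)) / 4))
      by (apply (smono D f p0 q0); auto; unfold h in *; lra).
    lra. }
  assert (C : slope f (p + 5*h) (p + 6*h) - slope f (p + h) (p + 2*h) <= W f p q).
  { unfold W.
    assert (slope f (p + 5*h) (p + 6*h) <= slope f (q - (q - p) / 4) q)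
      by (apply (smono D f p0 q0); auto; unfold h in *; lra).
    assert (slope f p (p + (q - p) / 4) <= slope f (p + h) (p + 2*h))
      by (apply (smono D f p0 q0); auto; unfold h in *; lra).
    lra. }
  destruct (Rle_dec (W f (p + 2 * h) (p + 3 * h)) (W f p q / 2)).
  - exists (p + 2 * h), (p + 3 * h). unfold h in *; repeat split; lra.
  - exists (p + 4 * h), (p + 5 * h). unfold h in *; repeat split; lra.
Qed.

Lemma pow2_big n : 1 + INR n <= 2 ^ n.
Proof. induction n; simpl pow; [simpl; lra|]. rewrite S_INR. pose proof (pos_INR n). lra. Qed.

Lemma diff_point D f p0 q0 : convex_on D f -> (forall x, p0 <= x <= q0 -> D x) -> p0 < q0 ->
  exists x l, p0 < x < q0 /\ derivable_pt_lim f x l.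
Proof.
  intros Hc HD Hpq.
  set (cond := fun pq : R * R => p0 <= fst pq /\ fst pq < snd pq /\ snd pq <= q0).
  set (Q := fun pq pq' : R * R => cond pq ->
     fst pq + (snd pq - fst pq) / 4 <= fst pq' /\ snd pq' <= snd pq - (snd pq - fst pq) / 4 /\
     fst pq' < snd pq' /\ W f (fst pq') (snd pq') <= W f (fst pq) (snd pq) / 2).
  assert (Hex : forall pq, exists pq', Q pq pq').
  { intros [p q]. destruct (classic (cond (p, q))) as [Hcd|Hcd].
    - destruct Hcd as [H1 [H2 H3]]. simpl in *.
      destruct (W_step D f p0 q0 p q Hc HD H1 H2 H3) as [p' [q' Hpq']].
      exists (p', q'). intros _. simpl. exact Hpq'.
    - exists (p, q). intros H; contradiction. }
  set (F := fun pq => proj1_sig (constructive_indefinite_description _ (Hex pq))).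
  assert (HF : forall pq, Q pq (F pq)).
  { intros pq. unfold F. destruct (constructive_indefinite_description _ (Hex pq)). simpl. auto. }
  set (s := fun n => Nat.iter n F (p0, q0)).
  assert (Hs : forall n, s (S n) = F (s n)) by reflexivity.
  set (pp := fun n => fst (s n)). set (qq := fun n => snd (s n)).
  set (W0 := W f p0 q0).
  assert (Inv : forall n, cond (s n) /\ W f (pp n) (qq n) <= W0 / 2 ^ n).
  { induction n.
    - unfold pp, qq, s, cond, W0; simpl. split; [repeat split; lra|]. lra.
    - destruct IHn as [Hc1 HW].
      destruct (HF (s n) Hc1) as [A [B [C E]]].
      unfold cond in Hc1 |- *. unfold pp, qq in *. rewrite Hs. simpl pow.
      split; [lra|].
      replace (W0 / (2 * 2 ^ n)) with ((W0 / 2 ^ n) / 2) by (field; pose proof (pow_lt 2 n); lra).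
      lra. }
  assert (Step : forall n, pp n + (qq n - pp n) / 4 <= pp (S n) /\ qq (S n) <= qq n - (qq n - pp n) / 4).
  { intros n. destruct (HF (s n) (proj1 (Inv n))) as [A [B _]]. unfold pp, qq. rewrite Hs. lra. }
  assert (Lt : forall n, pp n < qq n) by (intros n; destruct (Inv n) as [[? [? ?]] _]; unfold pp, qq; auto).
  assert (Bd : forall n, p0 <= pp n /\ qq n <= q0) by (intros n; destruct (Inv n) as [[? [? ?]] _]; unfold pp, qq; auto).
  assert (Mp : forall n m, (n <= m)%nat -> pp n <= pp m).
  { intros n m Hnm. induction Hnm; [lra|]. pose proof (Step m). pose proof (Lt m). lra. }
  assert (Mq : forall n m, (n <= m)%nat -> qq m <= qq n).
  { intros n m Hnm. induction Hnm; [lra|]. pose proof (Step m). pose proof (Lt m). lra. }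
  assert (PQ : forall n m, pp n <= qq m).
  { intros n m. destruct (Nat.le_ge_cases n m).
    - pose proof (Mp n m H). pose proof (Lt m). lra.
    - pose proof (Mq m n H). pose proof (Lt n). lra. }
  destruct (completeness (fun x => exists n, x = pp n)) as [xs [Hub Hlub]].
  { exists q0. intros x [n ->]. pose proof (Lt n); pose proof (Bd n). lra. }
  { exists (pp O). exists O. reflexivity. }
  assert (Xin : forall n, pp n <= xs <= qq n).
  { intros n. split.
    - apply Hub. exists n. reflexivity.
    - apply Hlub. intros x [m ->]. apply PQ. }
  assert (Xin2 : forall n, pp n + (qq n - pp n) / 4 <= xs <= qq n - (qq n - pp n) / 4).
  { intros n. pose proof (Xin (S n)). pose proof (Step n). lra. }
  assert (Hx0 : p0 < xs < q0).
  { pose proof (Xin2 O). pose proof (Lt O). pose proof (Bd O). lra. }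
  assert (Gap : forall n h, 0 < h -> h <= (qq n - pp n) / 4 ->
     slope f xs (xs + h) - slope f (xs - h) xs <= W f (pp n) (qq n)).
  { intros n h Hh1 Hh2. pose proof (Xin2 n). pose proof (Bd n). pose proof (Lt n). unfold W.
    assert (slope f xs (xs + h) <= slope f (qq n - (qq n - pp n) / 4) (qq n))
      by (apply (smono D f p0 q0); auto; lra).
    assert (slope f (pp n) (pp n + (qq n - pp n) / 4) <= slope f (xs - h) xs)
      by (apply (smono D f p0 q0); auto; lra).
    lra. }
  destruct (completeness (fun y => exists z, p0 <= z < xs /\ y = slope f z xs)) as [l [Hl1 Hl2]].
  { exists (slope f xs q0). intros y [z [Hz ->]].
    apply (smono D f p0 q0); auto; lra. }
  { exists (slope f p0 xs). exists p0. split; [lra|reflexivity]. }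
  assert (Lleft : forall z, p0 <= z < xs -> slope f z xs <= l).
  { intros z Hz. apply Hl1. exists z. auto. }
  assert (Lright : forall w, xs < w <= q0 -> l <= slope f xs w).
  { intros w Hw. apply Hl2. intros y [z [Hz ->]]. apply (smono D f p0 q0); auto; lra. }
  exists xs, l. split; [exact Hx0|].
  intros eps Heps.
  assert (W0pos : 0 <= W0).
  { pose proof (Inv O) as [_ H0]. unfold W0, W.
    assert (slope f p0 (p0 + (q0 - p0) / 4) <= slope f (q0 - (q0 - p0) / 4) q0)
      by (apply (smono D f p0 q0); auto; lra). lra. }
  destruct (archimed_cor1 (eps / (W0 + 1))) as [N [HN HN0]].
  { apply Rdiv_lt_0_compat; lra. }
  assert (WN : W f (pp N) (qq N) < eps).
  { destruct (Inv N) as [_ HW].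
    assert (0 < INR N) by (apply lt_0_INR; lia).
    pose proof (pow2_big N).
    assert (W0 / 2 ^ N <= W0 / INR N).
    { unfold Rdiv. apply Rmult_le_compat_l; [lra|]. apply Rinv_le_contravar; lra. }
    assert (W0 / INR N < eps).
    { assert (/ INR N * (W0 + 1) < eps / (W0 + 1) * (W0 + 1)) by (apply Rmult_lt_compat_r; lra).
      replace (eps / (W0 + 1) * (W0 + 1)) with eps in H2 by (field; lra).
      assert (W0 / INR N <= (W0 + 1) / INR N).
      { unfold Rdiv. apply Rmult_le_compat_r; [left; apply Rinv_0_lt_compat; lra|lra]. }
      unfold Rdiv in *. lra. }
    lra. }
  assert (eN : 0 < (qq N - pp N) / 4) by (pose proof (Lt N); lra).
  exists (mkposreal _ eN). simpl. intros h Hh0 Hh.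
  pose proof (Xin2 N). pose proof (Bd N). pose proof (Lt N).
  destruct (Rlt_or_le 0 h) as [Hp|Hn].
  - rewrite Rabs_pos_eq in Hh by lra.
    replace ((f (xs + h) - f xs) / h) with (slope f xs (xs + h)) by (unfold slope; f_equal; ring).
    pose proof (Gap N h Hp ltac:(lra)).
    pose proof (Lright (xs + h) ltac:(lra)).
    pose proof (Lleft (xs - h) ltac:(lra)).
    rewrite Rabs_pos_eq by lra. lra.
  - assert (Hneg : h < 0) by lra.
    rewrite Rabs_left in Hh by lra.
    replace ((f (xs + h) - f xs) / h) with (slope f (xs + h) xs)
      by (unfold slope; field; lra).
    pose proof (Gap N (- h) ltac:(lra) ltac:(lra)).
    replace (xs - - h) with (xs + h) in H2 by ring.
    pose proof (Lright (xs + - h) ltac:(lra)).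
    pose proof (Lleft (xs + h) ltac:(lra)).
    rewrite Rabs_left1 by lra. lra.
Qed.

Lemma poly_int (a b m : R) : a < b ->
  is_RInt (fun t => (t - m) ^ 2) a b ((b - m) ^ 3 / 3 - (a - m) ^ 3 / 3).
Proof.
  intros Hab.
  assert (H := is_RInt_derive (fun t => (t - m) ^ 3 / 3) (fun t => (t - m) ^ 2) a b).
  replace ((b - m) ^ 3 / 3 - (a - m) ^ 3 / 3) with (minus ((fun t => (t - m) ^ 3 / 3) b) ((fun t => (t - m) ^ 3 / 3) a)) by (unfold minus, plus, opp; simpl; ring).
  apply H.
  - intros x _. auto_derive; auto. field.
  - intros x _. apply (@ex_derive_continuous R_AbsRing R_NormedModule). auto_derive. auto.
Qed.

Lemma part2 : forall (a b c : R), a < b -> c < (b - a) / 12 ->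
     exists (P : R -> Prop) (f g : R -> R)
            (prf : Riemann_integrable f a b)
            (prg : Riemann_integrable (fun x => g x ^ 2) a b),
       is_interval P /\
       convex_on (interior P) f /\
       interior P a /\ interior P b /\
       is_derivative_where_exists f g a b /\
       f a * f b > 0 /\
       RiemannInt prf = 0 /\
       f a * f b > c * RiemannInt prg.
Proof.
  intros a b c Hab Hc.
  set (m := (a + b) / 2). set (L := b - a).
  set (f := fun t => (t - m) ^ 2 - L ^ 2 / 12).
  set (g := fun t => 2 * (t - m)).
  assert (prf : Riemann_integrable f a b).
  { apply continuity_implies_RiemannInt; [lra|]. intros x _.
    apply continuity_pt_filterlim, (@ex_derive_continuous R_AbsRing R_NormedModule). unfold f. auto_derive. auto. }
  assert (prg : Riemann_integrable (fun x => g x ^ 2) a b).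
  { apply continuity_implies_RiemannInt; [lra|]. intros x _.
    apply continuity_pt_filterlim, (@ex_derive_continuous R_AbsRing R_NormedModule). unfold g. auto_derive. auto. }
  exists (fun _ => True), f, g, prf, prg.
  assert (Hint : forall x, interior (fun _ : R => True) x).
  { intros x. exists (mkposreal 1 Rlt_0_1). intros y _. exact I. }
  assert (Ifv : RiemannInt prf = 0).
  { rewrite <- (RInt_Reals _ _ _ prf). apply is_RInt_unique.
    assert (H := is_RInt_derive (fun t => (t - m) ^ 3 / 3 - L ^ 2 / 12 * t) f a b).
    replace 0 with (minus ((fun t => (t - m) ^ 3 / 3 - L ^ 2 / 12 * t) b)
                          ((fun t => (t - m) ^ 3 / 3 - L ^ 2 / 12 * t) a)).
    - apply H.
      + intros x _. unfold f. auto_derive; auto. field.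
      + intros x _. apply (@ex_derive_continuous R_AbsRing R_NormedModule). unfold f. auto_derive. auto.
    - unfold minus, plus, opp. simpl. unfold m, L. field. }
  assert (Igv : RiemannInt prg = L ^ 3 / 3).
  { rewrite <- (RInt_Reals _ _ _ prg). apply is_RInt_unique.
    assert (H := is_RInt_derive (fun t => 4 * ((t - m) ^ 3 / 3)) (fun x => g x ^ 2) a b).
    replace (L ^ 3 / 3) with (minus ((fun t => 4 * ((t - m) ^ 3 / 3)) b)
                          ((fun t => 4 * ((t - m) ^ 3 / 3)) a)).
    - apply H.
      + intros x _. unfold g. auto_derive; auto. field.
      + intros x _. apply (@ex_derive_continuous R_AbsRing R_NormedModule). unfold g. auto_derive. auto.
    - unfold minus, plus, opp. simpl. unfold m, L. field. }
  assert (Hfa : f a = L ^ 2 / 6) by (unfold f, m, L; field).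
  assert (Hfb : f b = L ^ 2 / 6) by (unfold f, m, L; field).
  assert (HL : 0 < L) by (unfold L; lra).
  split; [intros x y z _ _ _; exact I|].
  split; [|split; [apply Hint|split; [apply Hint|split; [|split; [|split; [exact Ifv|]]]]]].
  - intros x y t _ _ Ht.
    assert (E : t * f x + (1 - t) * f y - f (t * x + (1 - t) * y) = t * (1 - t) * (x - y) ^ 2)
      by (unfold f; ring).
    assert (0 <= t * (1 - t) * (x - y) ^ 2).
    { apply Rmult_le_pos; [apply Rmult_le_pos; lra|]. apply pow2_ge_0. }
    lra.
  - intros x l _ Hl. apply (uniqueness_limite f x); [|exact Hl].
    apply is_derive_Reals. unfold f, g. auto_derive; auto. ring.
  - rewrite Hfa, Hfb. apply Rlt_gt. apply Rmult_lt_0_compat; apply Rdiv_lt_0_compat; try lra; apply pow_lt; lra.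
  - rewrite Hfa, Hfb, Igv. apply Rlt_gt.
    assert (0 < L ^ 3) by (apply pow_lt; lra).
    assert (c * (L ^ 3 / 3) < L / 12 * (L ^ 3 / 3)).
    { apply Rmult_lt_compat_r; [lra|]. unfold L in *. lra. }
    replace (L ^ 2 / 6 * (L ^ 2 / 6)) with (L / 12 * (L ^ 3 / 3)) by field. lra.
Qed.

Lemma abs_bounds x : - Rabs x <= x <= Rabs x.
Proof. unfold Rabs; destruct (Rcase_abs x); lra. Qed.

Lemma dlow D f lo hi u v t l : convex_on D f -> (forall x, lo <= x <= hi -> D x) ->
  lo <= u -> u < v -> v <= t -> t <= hi -> derivable_pt_lim f t l -> slope f u v <= l.
Proof.
  intros Hc HD H1 H2 H3 H4 Hl.
  destruct (Rle_dec (slope f u v) l) as [|Hn]; [auto|exfalso].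
  assert (Heps : 0 < slope f u v - l) by lra.
  destruct (Hl _ Heps) as [d Hd].
  assert (Hd0 := cond_pos d).
  set (k := Rmin (d / 2) (t - u)).
  assert (Hk : 0 < k) by (apply Rmin_pos; lra).
  assert (Hk1 : k <= d / 2) by apply Rmin_l.
  assert (Hk2 : k <= t - u) by apply Rmin_r.
  assert (HH := Hd (- k) ltac:(lra) ltac:(rewrite Rabs_Ropp, Rabs_pos_eq; lra)).
  replace ((f (t + - k) - f t) / - k) with (slope f (t - k) t) in HH
    by (unfold slope; replace (t + - k) with (t - k) by ring; field; lra).
  assert (slope f u v <= slope f (t - k) t) by (apply (smono D f lo hi); auto; lra).
  apply Rabs_def2 in HH. lra.
Qed.

Lemma dup D f lo hi u v t l : convex_on D f -> (forall x, lo <= x <= hi -> D x) ->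
  lo <= t -> t <= u -> u < v -> v <= hi -> derivable_pt_lim f t l -> l <= slope f u v.
Proof.
  intros Hc HD H1 H2 H3 H4 Hl.
  destruct (Rle_dec l (slope f u v)) as [|Hn]; [auto|exfalso].
  assert (Heps : 0 < l - slope f u v) by lra.
  destruct (Hl _ Heps) as [d Hd].
  assert (Hd0 := cond_pos d).
  set (k := Rmin (d / 2) (v - t)).
  assert (Hk : 0 < k) by (apply Rmin_pos; lra).
  assert (Hk1 : k <= d / 2) by apply Rmin_l.
  assert (Hk2 : k <= v - t) by apply Rmin_r.
  assert (HH := Hd k ltac:(lra) ltac:(rewrite Rabs_pos_eq; lra)).
  replace ((f (t + k) - f t) / k) with (slope f t (t + k)) in HH
    by (unfold slope; field; lra).
  assert (slope f t (t + k) <= slope f u v) by (apply (smono D f lo hi); auto; lra).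
  apply Rabs_def2 in HH. lra.
Qed.

Lemma ssum_lin p q r u v w k :
  ssum (fun i => p * u i + q * v i + r * w i) k = p * ssum u k + q * ssum v k + r * ssum w k.
Proof. induction k; simpl; [ring|]. rewrite IHk. ring. Qed.

Lemma part1 (P : R -> Prop) (f g : R -> R) (a b : R) :
  is_interval P -> convex_on (interior P) f -> interior P a -> interior P b -> a < b ->
  is_derivative_where_exists f g a b ->
  forall (prf : Riemann_integrable f a b) (prg : Riemann_integrable (fun x => g x ^ 2) a b),
  RiemannInt prf = 0 -> f a * f b <= (b - a) / 12 * RiemannInt prg.
Proof.
  intros HP Hc Ha Hb Hab Hder prf prg Hf0.
  set (D := interior P).
  assert (Hrho : exists rho, 0 < rho /\ forall y, a - 3*rho <= y <= b + 3*rho -> D y).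
  { destruct Ha as [da Hda]. destruct Hb as [db Hdb].
    assert (Hda0 := cond_pos da). assert (Hdb0 := cond_pos db).
    assert (Pa : P a) by (apply Hda; unfold disc; replace (a - a) with 0 by ring; rewrite Rabs_R0; lra).
    assert (Pb : P b) by (apply Hdb; unfold disc; replace (b - b) with 0 by ring; rewrite Rabs_R0; lra).
    pose proof (Rmin_l da db). pose proof (Rmin_r da db).
    assert (Hm : 0 < Rmin da db) by (apply Rmin_pos; lra).
    exists (Rmin da db / 8). split; [lra|].
    intros y Hy. assert (Hr : 0 < Rmin da db / 8) by lra.
    exists (mkposreal _ Hr). intros z Hz. unfold disc in Hz. simpl in Hz.
    apply Rabs_def2 in Hz.
    destruct (Rle_dec z a).
    - apply Hda. unfold disc. rewrite Rabs_left1 by lra. lra.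
    - destruct (Rle_dec b z).
      + apply Hdb. unfold disc. rewrite Rabs_pos_eq by lra. lra.
      + apply (HP a z b); auto; lra. }
  destruct Hrho as [rho [Hr HD]].
  set (lo := a - 2 * rho). set (hi := b + 2 * rho).
  assert (HD2 : forall x, lo <= x <= hi -> D x) by (intros; apply HD; unfold lo, hi in *; lra).
  set (K := Rabs (slope f (a - 2*rho) (a - rho)) + Rabs (slope f (b + rho) (b + 2*rho)) + 1).
  assert (HK0 : 0 < K).
  { unfold K. pose proof (Rabs_pos (slope f (a - 2*rho) (a - rho))).
    pose proof (Rabs_pos (slope f (b + rho) (b + 2*rho))). lra. }
  assert (HK : forall u v, a - rho <= u -> u < v -> v <= b + rho -> Rabs (slope f u v) <= K).
  { intros u v H1 H2 H3.
    assert (slope f (a - 2*rho) (a - rho) <= slope f u v)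
      by (apply (smono D f lo hi); auto; unfold lo, hi; lra).
    assert (slope f u v <= slope f (b + rho) (b + 2*rho))
      by (apply (smono D f lo hi); auto; unfold lo, hi; lra).
    pose proof (abs_bounds (slope f (a - 2*rho) (a - rho))).
    pose proof (abs_bounds (slope f (b + rho) (b + 2*rho))).
    apply Rabs_le. unfold K. lra. }
  assert (Hex : forall x y, exists t, (x <= y -> x <= t <= y) /\
            (a <= x -> x < y -> y <= b -> x < t < y /\ derivable_pt_lim f t (g t))).
  { intros x y. destruct (classic (a <= x /\ x < y /\ y <= b)) as [[H1 [H2 H3]]|Hn].
    - destruct (diff_point D f x y Hc ltac:(intros; apply HD; lra) H2) as [t [l [Ht Hl]]].
      exists t. split; [lra|]. intros _ _ _. split; [lra|].
      rewrite (Hder t l ltac:(lra) Hl). exact Hl.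
    - exists x. split; [lra|]. intros; exfalso; apply Hn; auto. }
  set (tau := fun x y => proj1_sig (constructive_indefinite_description _ (Hex x y))).
  assert (Htau : forall x y, (x <= y -> x <= tau x y <= y) /\
            (a <= x -> x < y -> y <= b -> x < tau x y < y /\ derivable_pt_lim f (tau x y) (g (tau x y)))).
  { intros x y. unfold tau. destruct (constructive_indefinite_description _ (Hex x y)). simpl. auto. }
  set (G := RiemannInt prg).
  assert (IG : is_RInt (fun x => g x ^ 2) a b G).
  { unfold G. assert (H := RInt_correct _ _ _ (ex_RInt_Reals_1 _ _ _ prg)).
    rewrite (RInt_Reals _ _ _ prg) in H. exact H. }
  assert (IF : is_RInt f a b 0).
  { assert (H := RInt_correct _ _ _ (ex_RInt_Reals_1 _ _ _ prf)).
    rewrite (RInt_Reals _ _ _ prf), Hf0 in H. exact H. }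
  set (m := (a + b) / 2). set (L := b - a).
  assert (HL : 0 < L) by (unfold L; lra).
  assert (IC : is_RInt (fun t => (t - m) ^ 2) a b (L ^ 3 / 12)).
  { replace (L ^ 3 / 12) with ((b - m) ^ 3 / 3 - (a - m) ^ 3 / 3) by (unfold m, L; field).
    apply poly_int; lra. }
  set (Sab := f a + f b).
  set (lam := 6 * Sab / L ^ 2).
  set (c := 1 + 4 * Rabs lam + lam ^ 2).
  assert (Main : forall eps, 0 < eps -> 3 * Sab ^ 2 / L - c * eps <= G).
  { intros eps Heps.
    destruct (bridge _ a b G Hab IG eps Heps) as [N1 HN1].
    destruct (bridge f a b 0 Hab IF eps Heps) as [N2 HN2].
    destruct (bridge _ a b (L ^ 3 / 12) Hab IC eps Heps) as [N3 HN3].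
    destruct (small_step rho L Hr HL) as [N4 HN4].
    assert (Hq : 0 < eps / (5 * K * L)).
    { apply Rdiv_lt_0_compat; [lra|]. apply Rmult_lt_0_compat; lra. }
    destruct (small_step _ L Hq HL) as [N5 HN5].
    set (n := (N1 + N2 + N3 + N4 + N5)%nat).
    set (dl := L / (INR n + 1)).
    set (x := X a b n).
    set (t := fun i => tau (x i) (x (S i))).
    set (A := ssum (fun i => dl * (g (t i)) ^ 2) (S n)).
    set (B := ssum (fun i => dl * f (x i)) (S n)).
    set (C := ssum (fun i => dl * (t i - m) ^ 2) (S n)).
    set (Dd := ssum (fun i => dl * ((t i - m) * g (t i))) (S n)).
    assert (HA : Rabs (A - G) < eps)
      by exact (HN1 n ltac:(unfold n; lia) tau (fun x y H => proj1 (Htau x y) H)).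
    assert (HB : Rabs (B - 0) < eps)
      by exact (HN2 n ltac:(unfold n; lia) (fun x y => x) (fun x y H => conj (Rle_refl x) H)).
    assert (HC : Rabs (C - L ^ 3 / 12) < eps)
      by exact (HN3 n ltac:(unfold n; lia) tau (fun x y H => proj1 (Htau x y) H)).
    assert (Hn1 : 0 < INR n + 1) by (pose proof (pos_INR n); lra).
    assert (Hdl : 0 < dl) by (unfold dl; apply Rdiv_lt_0_compat; lra).
    assert (Hdlr : dl < rho) by exact (HN4 n ltac:(unfold n; lia)).
    assert (Hdle : dl < eps / (5 * K * L)) by exact (HN5 n ltac:(unfold n; lia)).
    assert (Hdle' : 5 * K * L * dl < eps).
    { assert (0 < 5 * K * L) by (apply Rmult_lt_0_compat; lra).
      apply (Rmult_lt_compat_l (5 * K * L)) in Hdle; [|lra].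
      replace (5 * K * L * (eps / (5 * K * L))) with eps in Hdle by (field; lra). lra. }
    assert (Hndl : (INR n + 1) * dl = L) by (unfold dl; field; lra).
    assert (xE : forall i, x i = a + INR i * dl) by (intros i; unfold x, X, dl; fold L; field; lra).
    assert (xS : forall i, x (S i) = x i + dl) by (intros i; rewrite !xE, S_INR; ring).
    assert (xge : forall i, a <= x i).
    { intros i. rewrite xE. pose proof (pos_INR i). assert (0 <= INR i * dl) by (apply Rmult_le_pos; lra). lra. }
    assert (xle : forall i, (i <= S n)%nat -> x i <= b).
    { intros i Hi. rewrite xE. apply le_INR in Hi. rewrite S_INR in Hi.
      assert (INR i * dl <= (INR n + 1) * dl) by (apply Rmult_le_compat_r; lra). unfold L in Hndl. lra. }
    assert (xle2 : forall i, (i <= S (S n))%nat -> x i <= b + dl).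
    { intros i Hi. destruct (Nat.eq_dec i (S (S n))) as [->|Hne].
      - rewrite xS. pose proof (xle (S n) ltac:(lia)). lra.
      - pose proof (xle i ltac:(lia)). lra. }
    assert (x0 : x O = a) by (rewrite xE; simpl; ring).
    assert (xl : x (S n) = b) by (rewrite xE, S_INR; unfold L in Hndl; lra).
    set (u := fun j => slope f (x j - dl) (x j)).
    assert (uK : forall j, (j <= S (S n))%nat -> Rabs (u j) <= K).
    { intros j Hj. unfold u. apply HK; pose proof (xge j); pose proof (xle2 j Hj); lra. }
    assert (uS : forall i, u (S i) = slope f (x i) (x (S i))).
    { intros i. unfold u. rewrite xS. replace (x i + dl - dl) with (x i) by ring. reflexivity. }
    assert (Tg : forall i, (i <= n)%nat -> x i < t i < x (S i) /\ derivable_pt_lim f (t i) (g (t i))).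
    { intros i Hi. unfold t. apply (proj2 (Htau (x i) (x (S i)))).
      - apply xge.
      - rewrite xS; lra.
      - apply xle; lia. }
    assert (gB : forall i, (i <= n)%nat -> u i <= g (t i) <= u (S (S i))).
    { intros i Hi. destruct (Tg i Hi) as [Ht Hd]. pose proof (xge i). pose proof (xle2 (S (S i)) ltac:(lia)).
      pose proof (xS i). pose proof (xS (S i)).
      split.
      - unfold u. apply (dlow D f lo hi (x i - dl) (x i) (t i)); auto; unfold lo, hi; lra.
      - unfold u. apply (dup D f lo hi (x (S (S i)) - dl) (x (S (S i))) (t i)); auto; unfold lo, hi; lra. }
    assert (sB : forall i, (i <= n)%nat -> u i <= u (S i) <= u (S (S i))).
    { intros i Hi. pose proof (xge i). pose proof (xle2 (S (S i)) ltac:(lia)).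
      pose proof (xS i). pose proof (xS (S i)). rewrite uS. unfold u. split.
      - apply (smono D f lo hi); auto; unfold lo, hi; lra.
      - apply (smono D f lo hi); auto; unfold lo, hi; lra. }
    set (E := ssum (fun i => (x (S i) - m) * (f (x (S i)) - f (x i))) (S n)).
    assert (HE : E = L * Sab / 2 - B).
    { unfold E. set (v := fun i => (x i - m) * f (x i)).
      rewrite (ssum_ext _ (fun i => (v (S i) - v i) + (-1) * (dl * f (x i)))).
      2:{ intros i _. unfold v. rewrite xS. ring. }
      rewrite ssum_plus, ssum_scal, ssum_tele. unfold v. rewrite x0, xl. fold B. unfold Sab, m, L. field. }
    assert (HDE : Rabs (Dd - E) <= 5 * K * L * dl).
    { unfold Dd, E.
      eapply Rle_trans.
      { apply (ssum_absdiff _ _ (fun i => L * dl * (u (S (S i)) - u i) + dl * dl * K)).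
        intros i Hi. assert (Hi' : (i <= n)%nat) by lia.
        destruct (Tg i Hi') as [Ht _]. pose proof (gB i Hi'). pose proof (sB i Hi').
        pose proof (xge i). pose proof (xle (S i) ltac:(lia)).
        set (s := u (S i)).
        assert (Hfs : f (x (S i)) - f (x i) = dl * s).
        { unfold s. rewrite uS. unfold slope. rewrite xS. field. lra. }
        rewrite Hfs.
        replace (dl * ((t i - m) * g (t i)) - (x (S i) - m) * (dl * s))
          with (dl * ((t i - m) * (g (t i) - s)) + dl * ((t i - x (S i)) * s)) by ring.
        eapply Rle_trans; [apply Rabs_triang|].
        rewrite !Rabs_mult, (Rabs_pos_eq dl) by lra.
        assert (A1 : Rabs (t i - m) <= L) by (apply Rabs_le; unfold m, L; lra).
        assert (A2 : Rabs (g (t i) - s) <= u (S (S i)) - u i) by (unfold s; apply Rabs_le; lra).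
        assert (A3 : Rabs (t i - x (S i)) <= dl) by (apply Rabs_le; rewrite xS in *; lra).
        assert (A4 : Rabs s <= K) by (unfold s; apply uK; lia).
        assert (B1 : Rabs (t i - m) * Rabs (g (t i) - s) <= L * (u (S (S i)) - u i))
          by (apply Rmult_le_compat; auto using Rabs_pos).
        assert (B2 : Rabs (t i - x (S i)) * Rabs s <= dl * K)
          by (apply Rmult_le_compat; auto using Rabs_pos).
        apply Rmult_le_compat_l with (r := dl) in B1; [|lra].
        apply Rmult_le_compat_l with (r := dl) in B2; [|lra].
        lra. }
      rewrite (ssum_ext _ (fun i => (L * dl) * ((u (S (S i)) - u (S i)) + (u (S i) - u i)) + (dl * dl * K)))
        by (intros; ring).
      rewrite ssum_plus, ssum_scal, ssum_plus, ssum_const.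
      rewrite (ssum_tele (fun j => u (S j))), ssum_tele.
      pose proof (uK O ltac:(lia)). pose proof (uK 1%nat ltac:(lia)).
      pose proof (uK (S n) ltac:(lia)). pose proof (uK (S (S n)) ltac:(lia)).
      pose proof (abs_bounds (u O)). pose proof (abs_bounds (u 1%nat)).
      pose proof (abs_bounds (u (S n))). pose proof (abs_bounds (u (S (S n)))).
      assert (Hs4 : u (S (S n)) - u 1%nat + (u (S n) - u O) <= 4 * K) by lra.
      assert (L * dl * (u (S (S n)) - u 1%nat + (u (S n) - u O)) <= L * dl * (4 * K))
        by (apply Rmult_le_compat_l; [apply Rmult_le_pos|]; lra).
      rewrite S_INR.
      replace ((INR n + 1) * (dl * dl * K)) with (((INR n + 1) * dl) * dl * K) by ring.
      rewrite Hndl. lra. }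
    assert (HAi : 2 * lam * Dd - lam ^ 2 * C <= A).
    { assert (0 <= ssum (fun i => 1 * (dl * g (t i) ^ 2) + (- 2 * lam) * (dl * ((t i - m) * g (t i)))
                          + (lam ^ 2) * (dl * (t i - m) ^ 2)) (S n)).
      { replace 0 with (ssum (fun _ => 0) (S n)) by (rewrite ssum_const; ring).
        apply ssum_le. intros i _.
        replace (1 * (dl * g (t i) ^ 2) + -2 * lam * (dl * ((t i - m) * g (t i))) + lam ^ 2 * (dl * (t i - m) ^ 2))
          with (dl * (g (t i) - lam * (t i - m)) ^ 2) by ring.
        apply Rmult_le_pos; [lra|apply pow2_ge_0]. }
      rewrite ssum_lin in H. fold A Dd C in H. lra. }
    apply Rabs_def2 in HA. rewrite Rminus_0_r in HB. apply Rabs_def2 in HC.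
    assert (HDE' : Rabs (Dd - (L * Sab / 2 - B)) < eps) by (rewrite <- HE; lra).
    assert (H1 : 2 * lam * (L * Sab / 2 - B) - 2 * Rabs lam * eps <= 2 * lam * Dd).
    { pose proof (abs_bounds (2 * lam * (Dd - (L * Sab / 2 - B)))).
      rewrite !Rabs_mult in H. rewrite (Rabs_pos_eq 2) in H by lra.
      assert (Rabs lam * Rabs (Dd - (L * Sab / 2 - B)) <= Rabs lam * eps)
        by (apply Rmult_le_compat_l; [apply Rabs_pos|lra]).
      lra. }
    assert (H2 : 2 * lam * B <= 2 * Rabs lam * eps).
    { pose proof (abs_bounds (lam * B)). rewrite Rabs_mult in H.
      assert (Rabs lam * Rabs B <= Rabs lam * eps) by (apply Rmult_le_compat_l; [apply Rabs_pos|lra]).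
      lra. }
    assert (H3 : lam ^ 2 * C <= lam ^ 2 * (L ^ 3 / 12 + eps)).
    { apply Rmult_le_compat_l; [apply pow2_ge_0|lra]. }
    assert (H4 : lam * L * Sab - lam ^ 2 * (L ^ 3 / 12) = 3 * Sab ^ 2 / L) by (unfold lam; field; lra).
    unfold c. lra. }
  assert (HG : 3 * Sab ^ 2 / L <= G).
  { destruct (Rle_dec (3 * Sab ^ 2 / L) G) as [|Hn]; [auto|exfalso].
    assert (Hc1 : 1 <= c) by (unfold c; pose proof (Rabs_pos lam); pose proof (pow2_ge_0 lam); lra).
    assert (Hep : 0 < (3 * Sab ^ 2 / L - G) / (2 * c)) by (apply Rdiv_lt_0_compat; lra).
    pose proof (Main _ Hep).
    replace (c * ((3 * Sab ^ 2 / L - G) / (2 * c))) with ((3 * Sab ^ 2 / L - G) / 2) in H by (field; lra).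
    lra. }
  fold L. fold G.
  assert (L / 12 * (3 * Sab ^ 2 / L) <= L / 12 * G) by (apply Rmult_le_compat_l; lra).
  replace (L / 12 * (3 * Sab ^ 2 / L)) with (Sab ^ 2 / 4) in H by (field; lra).
  assert (0 <= (f a - f b) ^ 2) by apply pow2_ge_0.
  unfold Sab in H. lra.
Qed.

Theorem theorem3 :
  (forall (P : R -> Prop) (f g : R -> R) (a b : R),
     is_interval P ->
     convex_on (interior P) f ->
     interior P a -> interior P b -> a < b ->
     is_derivative_where_exists f g a b ->
     forall (prf : Riemann_integrable f a b)
            (prg : Riemann_integrable (fun x => g x ^ 2) a b),
     f a * f b > 0 ->
     RiemannInt prf = 0 ->
     f a * f b <= (b - a) / 12 * RiemannInt prg)
  /\
  (forall (a b c : R), a < b -> c < (b - a) / 12 ->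
     exists (P : R -> Prop) (f g : R -> R)
            (prf : Riemann_integrable f a b)
            (prg : Riemann_integrable (fun x => g x ^ 2) a b),
       is_interval P /\
       convex_on (interior P) f /\
       interior P a /\ interior P b /\
       is_derivative_where_exists f g a b /\
       f a * f b > 0 /\
       RiemannInt prf = 0 /\
       f a * f b > c * RiemannInt prg).
Proof.
  split.
  - intros P f g a b H1 H2 H3 H4 H5 H6 prf prg _ H0.
    exact (part1 P f g a b H1 H2 H3 H4 H5 H6 prf prg H0).
  - exact part2.
Qed.
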